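(* Let $(\Omega,\mathcal F)$ be a measurable space, $\mathcal I\in\Sigma$, and $A_n\in\mathcal F$, $n\in\mathbb N$. (1) If $A_1\subset A_2\subset\cdots$, set $\mathcal I_{\mathcal A}=\{I\cap A_1\mid I\in\mathcal I\}\cup\{(I\cup A_n)\cap A_{n+1}\mid I\in\mathcal I,\ n\in\mathbb N\}\cup\{I\cup\bigcup_{n}A_n\mid I\in\mathcal I\}$. Then $A_n\in\mathcal I_{\mathcal A}$ for all $n$, $\bigcup_n A_n\in\mathcal I_{\mathcal A}$, and $\mathcal I_{\mathcal A}\in\Sigma$. (2) If $A_1\supset A_2\supset\cdots$, set $\mathcal I_{\mathcal A}=\{I\cap\bigcap_n A_n\mid I\in\mathcal I\}\cup\{(I\cup A_{n+1})\cap A_n\mid I\in\mathcal I,\ n\in\mathbb N\}\cup\{I\cup A_1\mid I\in\mathcal I\}$. Then $A_n\in\mathcal I_{\mathcal A}$ for all $n$, $\bigcap_n A_n\in\mathcal I_{\mathcal A}$, and $\mathcal I_{\mathcal A}\in\Sigma$.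
   Context: $\Sigma$ denotes the set of all classes $\mathcal I\subset\mathcal F$ that are chains (totally ordered by inclusion), contain $\emptyset$ and $\Omega$, and satisfy $\sigma[\mathcal I]=\mathcal F$. *)

(* Defs.v *)
From mathcomp Require Import all_boot all_order.
From mathcomp Require Import all_classical all_reals.
From mathcomp Require Import measure.
Set Implicit Arguments. Unset Strict Implicit. Unset Printing Implicit Defensive.
Local Open Scope classical_set_scope.

Definition in_Sigma (T : Type) (F : set (set T)) (I : set (set T)) : Prop :=
  [/\ I `<=` F,
      (forall A B, I A -> I B -> A `<=` B \/ B `<=` A),
      I set0, I setT & <<s I >> = F].

Definition IA_incr (T : Type) (I : set (set T)) (A : nat -> set T) : set (set T) :=
  [set J | (exists2 C, I C & J = C `&` A 0%N)
        \/ (exists C n, I C /\ J = (C `|` A n) `&` A n.+1)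
        \/ (exists2 C, I C & J = C `|` \bigcup_n A n)].

Definition IA_decr (T : Type) (I : set (set T)) (A : nat -> set T) : set (set T) :=
  [set J | (exists2 C, I C & J = C `&` \bigcap_n A n)
        \/ (exists C n, I C /\ J = (C `|` A n.+1) `&` A n)
        \/ (exists2 C, I C & J = C `|` A 0%N)].

(* Main.v *)
Require Import Defs.
From mathcomp Require Import all_boot all_order.
From mathcomp Require Import all_classical all_reals.
From mathcomp Require Import measure.
Local Open Scope classical_set_scope.

Section SigmaHelpers.
Variables (T : Type) (G : set (set T)).
Hypothesis sG : sigma_algebra setT G.

Lemma sC A : G A -> G (~` A).
Proof. by case: sG => _ h _ /h; rewrite setTD. Qed.

Lemma sU A B : G A -> G B -> G (A `|` B).
Proof.
case: sG => h0 _ hU GA GB; rewrite -bigcup2E; apply: hU => -[|[|n]] //=.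
Qed.

Lemma sI A B : G A -> G B -> G (A `&` B).
Proof.
move=> GA GB; rewrite -[A `&` B]setCK setCI; apply: sC; apply: sU; exact: sC.
Qed.

Lemma sBU (F : nat -> set T) : (forall n, G (F n)) -> G (\bigcup_n F n).
Proof. by case: sG => _ _ hU; apply: hU. Qed.

Lemma sBI (F : nat -> set T) : (forall n, G (F n)) -> G (\bigcap_n F n).
Proof.
move=> hF; rewrite -[X in G X]setCK setC_bigcap; apply: sC; apply: sBU => n; exact: sC.
Qed.
End SigmaHelpers.

Lemma incr_le (T : Type) (A : nat -> set T) :
  (forall n, A n `<=` A n.+1) -> forall m k, A m `<=` A (m + k).
Proof.
move=> hA m; elim=> [|k IH]; first by rewrite addn0.
by rewrite addnS; apply: subset_trans IH (hA _).
Qed.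

Lemma incr_le' (T : Type) (A : nat -> set T) :
  (forall n, A n `<=` A n.+1) -> forall m n, (m <= n)%N -> A m `<=` A n.
Proof. by move=> hA m n /subnKC <-; apply: incr_le. Qed.

Lemma decr_le' (T : Type) (A : nat -> set T) :
  (forall n, A n.+1 `<=` A n) -> forall m n, (m <= n)%N -> A n `<=` A m.
Proof.
move=> hA m n /subnKC <-; elim: (n - m)%N => [|k IH]; first by rewrite addn0.
by rewrite addnS; apply: subset_trans (hA _) IH.
Qed.

Arguments incr_le' {T A}.
Arguments decr_le' {T A}.
Arguments sU {T G}.
Arguments sI {T G}.
Arguments sC {T G}.
Arguments sBU {T G}.
Arguments sBI {T G}.

Theorem lemma5 (d : measure_display) (T : measurableType d)
  (I : set (set T)) (A : nat -> set T) :
  in_Sigma measurable I ->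
  (forall n, measurable (A n)) ->
  ((forall n, A n `<=` A n.+1) ->
     (forall n, IA_incr I A (A n)) /\ IA_incr I A (\bigcup_n A n) /\
     in_Sigma measurable (IA_incr I A)) /\
  ((forall n, A n.+1 `<=` A n) ->
     (forall n, IA_decr I A (A n)) /\ IA_decr I A (\bigcap_n A n) /\
     in_Sigma measurable (IA_decr I A)).
Proof.
move=> [Isub Ich I0 IT Igen] mA; split=> hA.
- have hAn : forall n, IA_incr I A (A n).
    case=> [|n]; first by left; exists setT => //; rewrite setTI.
    by right; left; exists setT, n; rewrite setTU setTI.
  have hU : IA_incr I A (\bigcup_n A n).
    by right; right; exists set0 => //; rewrite set0U.
  have Hsub : IA_incr I A `<=` measurable.
    move=> J [[C IC ->]|[[C [n [IC ->]]]|[C IC ->]]].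
    * by apply: measurableI => //; apply: Isub.
    * by apply: measurableI => //; apply: measurableU => //; apply: Isub.
    * by apply: measurableU; [apply: Isub|apply: bigcupT_measurable].
  have AU n : A n `<=` \bigcup_n A n by move=> x An; exists n.
  do 2 (split => //).
  split => //.
  + move=> J1 J2 [[C1 IC1 ->]|[[C1 [n1 [IC1 ->]]]|[C1 IC1 ->]]]
                 [[C2 IC2 ->]|[[C2 [n2 [IC2 ->]]]|[C2 IC2 ->]]].
    * by case: (Ich C1 C2 IC1 IC2) => h; [left|right]; apply: setSI.
    * left=> x [_ x0]; have xn := incr_le' hA _ _ (leq0n n2) _ x0.
      by split; [right|apply: hA].
    * by left=> x [_ x0]; right; apply: AU x0.
    * right=> x [_ x0]; have xn := incr_le' hA _ _ (leq0n n1) _ x0.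
      by split; [right|apply: hA].
    * have [lt|gt|eq] := ltngtP n1 n2.
      - left=> x [_ xn]; have xm := incr_le' hA _ _ lt _ xn.
        by split; [right|apply: hA].
      - right=> x [_ xn]; have xm := incr_le' hA _ _ gt _ xn.
        by split; [right|apply: hA].
      - subst n2; case: (Ich C1 C2 IC1 IC2) => h; [left|right];
          by move=> x [[c|a] b]; split=> //; [left; apply: h|right].
    * by left=> x [_ xn]; right; apply: AU xn.
    * by right=> x [_ x0]; right; apply: AU x0.
    * by right=> x [_ xn]; right; apply: AU xn.
    * by case: (Ich C1 C2 IC1 IC2) => h; [left|right]; apply: setSU.
  + by left; exists set0 => //; rewrite set0I.
  + by right; right; exists setT => //; rewrite setTU.
  + apply/seteqP; split.
      by apply: smallest_sub => //; exact: sigma_algebra_measurable.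
    rewrite -Igen; apply: smallest_sub; first exact: smallest_sigma_algebra.
    move=> C IC.
    have sG := @smallest_sigma_algebra T setT (IA_incr I A).
    have gen := @sub_gen_smallest _ (sigma_algebra setT) (IA_incr I A).
    have GA n : <<s IA_incr I A >> (C `&` A n).
      elim: n => [|n IH]; first by apply: gen; left; exists C.
      have -> : C `&` A n.+1 =
          (C `&` A n) `|` (((C `|` A n) `&` A n.+1) `&` ~` A n).
        rewrite predeqE => x /=; have := hA n x.
        case: (pselect (A n x)); case: (pselect (C x)); tauto.
      apply: (sU sG) => //; apply: (sI sG).
        by apply: gen; right; left; exists C, n; split.
      by apply: (sC sG); apply: gen.
    have -> : C = (\bigcup_n (C `&` A n)) `|`
                  ((C `|` \bigcup_n A n) `&` ~` \bigcup_n A n).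
      rewrite -setI_bigcupr predeqE => x /=.
      case: (pselect ((\bigcup_n A n) x)); case: (pselect (C x)); tauto.
    apply: (sU sG); first exact: (sBU sG).
    apply: (sI sG); first by apply: gen; right; right; exists C.
    by apply: (sC sG); apply: gen.
- have hAn : forall n, IA_decr I A (A n).
    case=> [|n]; first by right; right; exists set0 => //; rewrite set0U.
    by right; left; exists set0, n; split => //; rewrite set0U setIidl.
  have hD : IA_decr I A (\bigcap_n A n).
    by left; exists setT => //; rewrite setTI.
  have Hsub : IA_decr I A `<=` measurable.
    move=> J [[C IC ->]|[[C [n [IC ->]]]|[C IC ->]]].
    * by apply: measurableI; [apply: Isub|apply: bigcapT_measurable].
    * by apply: measurableI => //; apply: measurableU => //; apply: Isub.
    * by apply: measurableU => //; apply: Isub.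
  have DA n : \bigcap_n A n `<=` A n by move=> x Dx; apply: Dx.
  do 2 (split => //).
  split => //.
  + move=> J1 J2 [[C1 IC1 ->]|[[C1 [n1 [IC1 ->]]]|[C1 IC1 ->]]]
                 [[C2 IC2 ->]|[[C2 [n2 [IC2 ->]]]|[C2 IC2 ->]]].
    * by case: (Ich C1 C2 IC1 IC2) => h; [left|right]; apply: setSI.
    * by left=> x [_ xD]; split; [right|]; apply: DA xD.
    * by left=> x [_ xD]; right; apply: DA xD.
    * by right=> x [_ xD]; split; [right|]; apply: DA xD.
    * have [lt|gt|eq] := ltngtP n1 n2.
      - right=> x [_ xn]; have xm := decr_le' hA _ _ lt _ xn.
        by split; [right|apply: hA].
      - left=> x [_ xn]; have xm := decr_le' hA _ _ gt _ xn.
        by split; [right|apply: hA].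
      - subst n2; case: (Ich C1 C2 IC1 IC2) => h; [left|right];
          by move=> x [[c|a] b]; split=> //; [left; apply: h|right].
    * by left=> x [_ xn]; right; apply: (decr_le' hA _ _ (leq0n n1)).
    * by right=> x [_ xD]; right; apply: DA xD.
    * by right=> x [_ xn]; right; apply: (decr_le' hA _ _ (leq0n n2)).
    * by case: (Ich C1 C2 IC1 IC2) => h; [left|right]; apply: setSU.
  + by left; exists set0 => //; rewrite set0I.
  + by right; right; exists setT => //; rewrite setTU.
  + apply/seteqP; split.
      by apply: smallest_sub => //; exact: sigma_algebra_measurable.
    rewrite -Igen; apply: smallest_sub; first exact: smallest_sigma_algebra.
    move=> C IC.
    have sG := @smallest_sigma_algebra T setT (IA_decr I A).
    have gen := @sub_gen_smallest _ (sigma_algebra setT) (IA_decr I A).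
    have GA n : <<s IA_decr I A >> (C `|` A n).
      elim: n => [|n IH]; first by apply: gen; right; right; exists C.
      have -> : C `|` A n.+1 =
          ((C `|` A n.+1) `&` A n) `|` ((C `|` A n) `&` ~` A n).
        rewrite predeqE => x /=; have := hA n x.
        case: (pselect (A n x)); case: (pselect (A n.+1 x));
          case: (pselect (C x)); tauto.
      apply: (sU sG).
        by apply: gen; right; left; exists C, n; split.
      by apply: (sI sG) => //; apply: (sC sG); apply: gen.
    have -> : C = (C `&` \bigcap_n A n) `|`
                  ((\bigcap_n (C `|` A n)) `&` ~` \bigcap_n A n).
      rewrite -setU_bigcapr predeqE => x /=.
      case: (pselect ((\bigcap_n A n) x)); case: (pselect (C x)); tauto.
    apply: (sU sG).
      by apply: gen; left; exists C.
    apply: (sI sG); first exact: (sBI sG).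
    by apply: (sC sG); apply: gen.
Qed.
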